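(* Let $\mathcal{B}$ be a $\sigma$-algebra on a nonempty set $E$. A $\sigma$-maxitive measure on $\mathcal{B}$ is optimal if and only if it is exhaustive.
   Context: A maxitive measure on $\mathcal{B}$ is $\nu:\mathcal{B}\to[0,\infty]$ with $\nu(\emptyset)=0$ and $\nu(B\cup B')=\max(\nu(B),\nu(B'))$; it is $\sigma$-maxitive if moreover $\nu(\bigcup_nB_n)=\lim_n\nu(B_n)$ for every nondecreasing sequence $(B_n)$ in $\mathcal{B}$ (continuity from below). $\nu$ is continuous from above if $\nu(\bigcap_nB_n)=\lim_n\nu(B_n)$ for every nonincreasing sequence $B_1\supset B_2\supset\cdots$ in $\mathcal{B}$ (with no finiteness requirement). An optimal measure is a maxitive measure that is continuous from both above and below. $\nu$ is exhaustive if $\nu(B_n)\to0$ for every sequence $(B_n)$ of pairwise disjoint elements of $\mathcal{B}$. *)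

(* Defs.v *)
From HB Require Import structures.
From mathcomp Require Import all_boot all_order all_algebra.
From mathcomp Require Import all_classical all_reals all_analysis.
Set Implicit Arguments. Unset Strict Implicit. Unset Printing Implicit Defensive.
Import Order.TTheory GRing.Theory Num.Theory.
Local Open Scope classical_set_scope.
Local Open Scope ring_scope.
Local Open Scope ereal_scope.

Section MaxitiveDefs.
Context {d : measure_display} {T : measurableType d} {R : realType}.
Implicit Types (nu : set T -> \bar R).

Definition maxitive nu : Prop :=
  [/\ nu set0 = 0,
      (forall A, measurable A -> 0 <= nu A) &
      (forall A B, measurable A -> measurable B ->
         nu (A `|` B) = maxe (nu A) (nu B))].

Definition cont_from_below nu : Prop :=
  forall F : (set T)^nat, (forall n, measurable (F n)) ->
    {homo F : n m / (n <= m)%N >-> n `<=` m} ->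
    nu \o F @ \oo --> nu (\bigcup_n F n).

Definition cont_from_above nu : Prop :=
  forall F : (set T)^nat, (forall n, measurable (F n)) ->
    {homo F : n m / (n <= m)%N >-> m `<=` n} ->
    nu \o F @ \oo --> nu (\bigcap_n F n).

Definition sigma_maxitive nu : Prop := maxitive nu /\ cont_from_below nu.

Definition optimal nu : Prop :=
  [/\ maxitive nu, cont_from_above nu & cont_from_below nu].

Definition exhaustive nu : Prop :=
  forall F : (set T)^nat, (forall n, measurable (F n)) ->
    trivIset setT F -> nu \o F @ \oo --> 0.

End MaxitiveDefs.

(* Main.v *)
Require Import Defs.
From HB Require Import structures.
From mathcomp Require Import all_boot all_order all_algebra.
From mathcomp Require Import all_classical all_reals all_analysis.
Import Order.TTheory GRing.Theory Num.Theory.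
Local Open Scope classical_set_scope.
Local Open Scope ereal_scope.

Lemma maxi_mono (d : measure_display) (T : measurableType d)
  (R : realType) (nu : set T -> \bar R) (A B : set T) :
  maxitive nu -> measurable A -> measurable B -> A `<=` B -> nu A <= nu B.
Proof.
move=> [_ _ hU] mA mB AB.
rewrite -(setDUK AB) hU //; last exact: measurableD.
by rewrite le_max lexx.
Qed.

Lemma opt_exh (d : measure_display) (T : measurableType d)
  (R : realType) (nu : set T -> \bar R) : optimal nu -> exhaustive nu.
Proof.
move=> [hm ha hb] F mF tF.
pose C n := \bigcup_(k in [set k | (n <= k)%N]) F k.
have mC n : measurable (C n) by apply: bigcup_measurable => k _; exact: mF.
have Cdec : {homo C : n m / (n <= m)%N >-> m `<=` n}.
  move=> n m nm x [k /= mk Fx]; exists k => //=; exact: leq_trans nm mk.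
have C0 : \bigcap_n C n = set0.
  apply/seteqP; split => // x Cx.
  have [k _ Fk] := Cx 0%N I.
  have [j /= kj Fj] := Cx k.+1 I.
  have := tF k j I I; rewrite /= => /(_ (ex_intro _ x (conj Fk Fj))) kj'.
  by move: kj; rewrite kj' ltnn.
have := ha C mC Cdec; rewrite C0 => hC.
have [h0 hpos _] := hm.
rewrite h0 in hC.
apply: (@squeeze_cvge _ _ _ _ (cst 0) _ (nu \o C)) => //; last exact: cvg_cst.
apply: nearW => n /=; rewrite hpos //=.
apply: maxi_mono => //; move=> x Fx; exists n => //=.
Qed.

Lemma exh_above (d : measure_display) (T : measurableType d)
  (R : realType) (nu : set T -> \bar R) :
  sigma_maxitive nu -> exhaustive nu -> cont_from_above nu.
Proof.
move=> [hm hb] hex F mF Fdec.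
have [h0 hpos hU] := hm.
pose B := \bigcap_n F n.
have mB : measurable B by apply: bigcap_measurable => // k _; exact: mF.
pose l := ereal_inf (range (nu \o F)).
have hcv : nu \o F @ \oo --> l.
  apply: ereal_nonincreasing_cvgn => n m nm /=.
  by apply: maxi_mono => //; exact: Fdec.
have lF n : l <= nu (F n) by apply: ereal_inf_lbound; exists n.
have Bl : nu B <= l.
  apply: le_ereal_inf_tmp => _ [n _ <-] /=.
  by apply: maxi_mono => //; exact: bigcap_inf.
suff -> : nu B = l by [].
apply/eqP; rewrite eq_le Bl /=; apply/negPn/negP; rewrite -ltNge => Bltl.
have [e e0 el] : exists2 e : R, (0 < e)%R & e%:E < l.
  have l0 : 0 < l by apply: le_lt_trans Bltl; exact: hpos.
  move: l0; generalize l => -[r||] //=.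
  - rewrite lte_fin => r0; exists (r / 2)%R; first by rewrite divr_gt0.
    by rewrite lte_fin ltr_pdivrMr // ltr_pMr // ltr1n.
  - by move=> *; exists 1%R => //; rewrite ltry.
pose D n := F n `\` B.
have mD n : measurable (D n) by apply: measurableD.
have Ddec : {homo D : n m / (n <= m)%N >-> m `<=` n}.
  by move=> n m nm x [Fx Bx]; split => //; exact: Fdec nm x Fx.
have Dl n : l <= nu (D n).
  rewrite leNgt; apply/negP => Dn.
  have : nu (F n) < l.
    have BF : B `<=` F n by move=> x Bx; exact: Bx.
    rewrite -(setDUK BF) hU //; last exact: (mD n).
    by rewrite gt_max Dn (le_lt_trans _ Bltl).
  by move=> /lt_le_trans /(_ (lF n)); rewrite ltxx.
have step n : exists m, (n < m)%N /\ e%:E < nu (D n `\` D m).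
  apply/not_existsP => hn.
  pose H m := D n `\` D m.
  have mH m : measurable (H m) by apply: measurableD.
  have Hinc : {homo H : i j / (i <= j)%N >-> i `<=` j}.
    by move=> i j ij x [Dx nDx]; split => // /(Ddec _ _ ij).
  have HU : \bigcup_m H m = D n.
    apply/seteqP; split => x.
      by move=> [m _ []].
    move=> [Fx nBx].
    have [m _ nFm] : exists2 m, True & ~ F m x.
      apply: contrapT => hh; apply: nBx => k _.
      apply: contrapT => nk; apply: hh; by exists k.
    exists m => //; split => //; by move=> [].
  have hc := hb H mH Hinc; rewrite HU in hc.
  have : nu (D n) <= e%:E.
    rewrite -(cvg_lim _ hc) //.
    apply: lime_le; first by apply/cvg_ex; eexists; exact: hc.
    near=> m; rewrite leNgt; apply/negP => he.
    apply: (hn m); split => //.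
    near: m; exact: nbhs_infty_gt.
  by rewrite leNgt (lt_le_trans el (Dl n)).
pose f n := proj1_sig (cid (step n)).
have fP n : (n < f n)%N /\ e%:E < nu (D n `\` D (f n)) := proj2_sig (cid (step n)).
pose g k := iter k f 0%N.
have gS k : g k.+1 = f (g k) by [].
have ginc : {homo g : i j / (i < j)%N >-> (i < j)%N}.
  by apply: homo_ltn; [exact: ltn_trans | move=> i; rewrite gS; case: (fP (g i))].
pose G k := D (g k) `\` D (g k.+1).
have mG k : measurable (G k) by apply: measurableD.
have tG : trivIset setT G.
  suff hh i j : (i < j)%N -> G i `&` G j = set0.
    move=> i j _ _ [x [Gi Gj]].
    have [ij|ji|//] := ltngtP i j.
    - by have := hh _ _ ij; move/seteqP => [/(_ x (conj Gi Gj))].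
    - by have := hh _ _ ji; move/seteqP => [/(_ x (conj Gj Gi))].
  move=> ij; apply/seteqP; split => // x [[_ nD] [Dj _]].
  apply: nD; apply: (Ddec _ _ _ x Dj).
  move: ij; rewrite leq_eqVlt => /orP[/eqP<-//|ij].
  exact: ltnW (ginc _ _ ij).
have hG := hex G mG tG.
have : e%:E <= 0.
  rewrite -(cvg_lim _ hG) //.
  apply: lime_ge; first by apply/cvg_ex; eexists; exact: hG.
  by apply: nearW => k /=; rewrite /G gS; case: (fP (g k)) => _ /ltW.
by rewrite leNgt lte_fin e0.
Unshelve. all: by end_near.
Qed.

Theorem proposition6p4 (d : measure_display) (T : measurableType d)
  (R : realType) (nu : set T -> \bar R) :
  [set: T] !=set0 ->
  sigma_maxitive nu ->
  (optimal nu <-> exhaustive nu).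
Proof.
move=> _ hs; split; first exact: opt_exh.
move=> hex; have [hm hb] := hs; split => //; exact: exh_above.
Qed.
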